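(* Let $1\le p\le q$ and $0\le a\le p$. The $SU(p,q)$-flag domain $D_a$ in the Grassmannian of $p$-planes in $\mathbb{C}^{p+q}$ is generically $1$-connected if and only if $p\le 2a\le q$.
   Context: Let $\langle\cdot,\cdot\rangle$ be a Hermitian form of signature $(p,q)$ on $\mathbb{C}^{p+q}$, $G=SL(p+q,\mathbb{C})$ and $G_0=SU(p,q)$ the subgroup preserving it. $Z$ is the Grassmannian of $p$-dimensional subspaces of $\mathbb{C}^{p+q}$ (irreducible compact Hermitian symmetric of type AIII). For $0\le a\le p$, $D_a$ is the open $G_0$-orbit of those $p$-planes on which $\langle\cdot,\cdot\rangle$ is nondegenerate of signature $(p-a,a)$. Generic $1$-connectivity: let $K_0\subset G_0$ be a maximal compact subgroup and $K$ its complexification; the base cycle $C_0$ is the $K_0$-orbit in $D_a$ that is a complex submanifold. For $z\in C_0$ let $Q_z\subset G$ be its isotropy group and $\mathcal{O}$ the unique open $Q_z$-orbit in $Z$. $D_a$ is generically $1$-connected if $C_0\cap\mathcal{O}\neq\emptyset$. *)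

(* Defs.v *)
From mathcomp Require Import all_boot all_algebra.
From mathcomp Require Import complex reals.
Set Implicit Arguments. Unset Strict Implicit. Unset Printing Implicit Defensive.
Import GRing.Theory Num.Theory.
Local Open Scope ring_scope.

Section FlagDomain.
Variables (R : realType) (p q : nat).
Local Notation C := (R[i]).
Local Notation n := (p + q)%N.

(* Points of Z = Gr(p, C^n) are represented by full-rank p x n matrices, the  *)
(* point being the row space; two matrices represent the same point iff      *)
(* their row spaces coincide ((M == M')%MS).  Row vectors are acted on from  *)
(* the right: v |-> v *m g, so a p-plane rowspace(z) goes to rowspace(z *m g).*)
Definition Zpt := 'M[C]_(p, n).

Definition hform (v w : 'rV[C]_n) : C :=
  \sum_(i < n) (if (i < p)%N then 1 else -1) * v 0 i * (w 0 i)^*.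

Definition posdef k (M : 'M[C]_(k, n)) : Prop :=
  forall u : 'rV[C]_k, u *m M != 0 -> 0 < hform (u *m M) (u *m M).
Definition negdef k (M : 'M[C]_(k, n)) : Prop :=
  forall u : 'rV[C]_k, u *m M != 0 -> hform (u *m M) (u *m M) < 0.

Definition has_signature (z : Zpt) (s t : nat) : Prop :=
  exists (P : 'M[C]_(s, n)) (N : 'M[C]_(t, n)),
    row_free P /\ row_free N /\ (col_mx P N == z)%MS /\
    (forall u v, hform (u *m P) (v *m N) = 0) /\
    posdef P /\ negdef N.

Definition Dom (a : nat) : Zpt -> Prop :=
  fun z => row_free z /\ has_signature z (p - a) a.

Definition inG (g : 'M[C]_n) : Prop := \det g = 1.
Definition inG0 (g : 'M[C]_n) : Prop :=
  inG g /\ forall u v : 'rV[C]_n, hform (u *m g) (v *m g) = hform u v.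
Definition blockdiag (g : 'M[C]_n) : Prop :=
  forall i j : 'I_n, (i < p)%N != (j < p)%N -> g i j = 0.
Definition inK0 (g : 'M[C]_n) : Prop :=
  inG0 g /\ forall u v : 'rV[C]_n,
    \sum_(i < n) (u *m g) 0 i * ((v *m g) 0 i)^* = \sum_(i < n) u 0 i * (v 0 i)^*.
Definition inK (g : 'M[C]_n) : Prop := inG g /\ blockdiag g.

Definition orbit (H : 'M[C]_n -> Prop) (z : Zpt) : Zpt -> Prop :=
  fun w => row_free w /\ exists g, H g /\ (w == z *m g)%MS.

(* Base cycle: the K_0-orbit in D_a which is a complex submanifold,          *)
(* characterized as a K_0-orbit contained in D_a that is K-stable.          *)
Definition base_cycle (a : nat) (C0 : Zpt -> Prop) : Prop :=
  (exists z0, row_free z0 /\ forall w, C0 w <-> orbit inK0 z0 w) /\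
  (forall w, C0 w -> Dom a w) /\
  (forall w g, C0 w -> inK g -> C0 (w *m g)).

Definition isotropy (z : Zpt) (g : 'M[C]_n) : Prop := inG g /\ (z *m g == z)%MS.

(* Openness of a set of points of Z, for the (quotient) topology of Z:       *)
(* the set of full-rank representing matrices is open in M_(p,n)(C).        *)
Definition Zopen (S : Zpt -> Prop) : Prop :=
  forall M, S M -> exists eps : C, 0 < eps /\
    forall M' : Zpt, row_free M' -> (forall i j, `|M' i j - M i j| < eps) -> S M'.

Definition is_open_orbit (H : 'M[C]_n -> Prop) (O : Zpt -> Prop) : Prop :=
  (exists w, row_free w /\ forall x, O x <-> orbit H w x) /\ Zopen O.

Definition generically_1_connected (a : nat) : Prop :=
  exists C0, base_cycle a C0 /\
    forall z, C0 z ->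
      exists O, is_open_orbit (isotropy z) O /\ exists w, C0 w /\ O w.

End FlagDomain.

(* Main.v *)
Require Import Defs.
From mathcomp Require Import all_boot all_order all_algebra zify.
From mathcomp Require Import complex reals.
From mathcomp Require Import sesquilinear spectral.
Set Implicit Arguments. Unset Strict Implicit. Unset Printing Implicit Defensive.
Import Order.TTheory GRing.Theory Num.Theory.
Local Open Scope ring_scope.
Local Open Scope sesquilinear_scope.

Section Generic.
Variable F : fieldType.

Lemma kerfree m k (M : 'M[F]_(m,k)) :
  (forall v : 'rV_m, v *m M = 0 -> v = 0) -> row_free M.
Proof.
move=> H; rewrite -kermx_eq0; apply/eqP/row_matrixP => i.
by rewrite row0; apply: H; rewrite -row_mul mulmx_ker row0.
Qed.

Definition emb k r (G : 'M[F]_r) : 'M[F]_k :=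
  pid_mx r *m G *m pid_mx r + copid_mx r.

Lemma pid_emb k r (G : 'M[F]_r) : (r <= k)%N ->
  (pid_mx r : 'M_(r,k)) *m emb k G = G *m pid_mx r.
Proof.
move=> rk; rewrite /emb mulmxDr mul_pid_mx_copid // addr0 !mulmxA mul_pid_mx.
by rewrite minnn (minn_idPr rk) pid_mx_1 mul1mx.
Qed.

Lemma emb_mul k r (G H : 'M[F]_r) : (r <= k)%N ->
  emb k G *m emb k H = emb k (G *m H).
Proof.
move=> rk; rewrite {1}/emb mulmxDl -!mulmxA pid_emb // /emb mulmxDr !mulmxA.
by rewrite mul_copid_mx_pid // !mul0mx add0r copid_mx_id.
Qed.

Lemma emb1 k r : emb k (1%:M : 'M[F]_r) = 1%:M.
Proof. by rewrite /emb mulmx1 mul_pid_mx !minnn /copid_mx addrC subrK. Qed.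

Lemma emb_unit k r (G : 'M[F]_r) : (r <= k)%N -> G \in unitmx -> emb k G \in unitmx.
Proof.
move=> rk uG; have := @emb_mul k r G (invmx G) rk; rewrite mulmxV // emb1.
by case/mulmx1_unit.
Qed.

Lemma pid_row s m k (A : 'M[F]_(m,k)) (i : 'I_s) (sm : (s <= m)%N) :
  row i (pid_mx s *m A) = row (widen_ord sm i) A.
Proof.
apply/rowP => j; rewrite !mxE (bigD1 (widen_ord sm i)) //= big1 ?addr0.
  by rewrite !mxE eqxx ltn_ord mul1r.
move=> l hl; rewrite !mxE; case: eqP => [h|]; last by rewrite mul0r.
by case/eqP: hl; apply/val_inj; rewrite /= h.
Qed.

Definition sel m k (f : 'I_m -> 'I_k) : 'M[F]_(m,k) := \matrix_(i, j) (j == f i)%:R.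

Lemma row_sel m k (f : 'I_m -> 'I_k) i : row i (sel f) = delta_mx 0 (f i).
Proof. by apply/rowP => j; rewrite !mxE eqxx. Qed.

Lemma sel_sub m1 m2 k (f : 'I_m1 -> 'I_k) (g : 'I_m2 -> 'I_k) :
  (forall i, exists j, f i = g j) -> (sel f <= sel g)%MS.
Proof.
move=> H; apply/row_subP => i; rewrite row_sel; have [j ->] := H i.
by rewrite -(row_sel g j) row_sub.
Qed.

Lemma sel_free m k (f : 'I_m -> 'I_k) : injective f -> row_free (sel f).
Proof.
move=> injf; apply: kerfree => v hv; apply/rowP => i.
have := congr1 (fun M : 'rV[F]_k => M 0 (f i)) hv; rewrite !mxE (bigD1 i) //= big1 ?addr0.
  by rewrite !mxE eqxx mulr1.
by move=> j ji; rewrite !mxE; case: eqP => [/injf h|]; [rewrite h eqxx in ji | rewrite mulr0].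
Qed.

Lemma sel_mul m k l (f : 'I_m -> 'I_k) (g : 'I_k -> 'I_l) :
  sel f *m sel g = sel (g \o f).
Proof.
apply/matrixP => i j; rewrite !mxE (bigD1 (f i)) //= big1 ?addr0.
  by rewrite !mxE eqxx mul1r.
by move=> x /negbTE xf; rewrite !mxE xf mul0r.
Qed.

Lemma unit_det_neq0 m (A : 'M[F]_m) : (A \in unitmx) = (\det A != 0).
Proof. by rewrite unitmxE unitfE. Qed.

End Generic.

Section Closed.
Variable C : numClosedFieldType.

Lemma pid_schmidt s m (A : 'M[C]_m) : (s <= m)%N -> A \in unitmx ->
  ((pid_mx s : 'M_(s,m)) *m A :=: (pid_mx s : 'M_(s,m)) *m schmidt A)%MS.
Proof.
move=> sm uA; have uS : schmidt A \in unitmx.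
  by apply: unitarymx_unit; apply: schmidt_unitarymx.
apply/eqmxP; rewrite -mxrank_leqif_eq.
  by rewrite !mxrankMfree ?row_free_unit // rank_pid_mx.
apply/row_subP => i; rewrite pid_row.
apply: submx_trans (row_schmidt_sub _ _) _.
apply/sumsmx_subP => k /= hk; rewrite genmxE.
have ks : (k < s)%N by apply: leq_ltn_trans hk _.
have -> : row k (schmidt A) = row (Ordinal ks) (pid_mx s *m schmidt A).
  by rewrite pid_row; congr row; apply/val_inj.
exact: row_sub.
Qed.

Lemma cadjM m k l (A : 'M[C]_(m,k)) (B : 'M_(k,l)) : (A *m B)^t* = B^t* *m A^t*.
Proof. by rewrite trmx_mul map_mxM. Qed.

Lemma cadjZ m k (c : C) (A : 'M[C]_(m,k)) : (c *: A)^t* = c^* *: A^t*.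
Proof. by apply/matrixP => i j; rewrite !mxE rmorphM. Qed.

Lemma adj_sel m k (f : 'I_m -> 'I_k) : (sel C f)^t* = \matrix_(i, j) (i == f j)%:R.
Proof. by apply/matrixP => i j; rewrite !mxE rmorph_nat. Qed.

Lemma sel_adj m1 m2 k (f : 'I_m1 -> 'I_k) (g : 'I_m2 -> 'I_k) :
  sel C f *m (sel C g)^t* = \matrix_(i, j) (f i == g j)%:R.
Proof.
rewrite adj_sel; apply/matrixP => i j; rewrite !mxE (bigD1 (f i)) //= big1 ?addr0.
  by rewrite !mxE eqxx mul1r.
by move=> x /negbTE xf; rewrite !mxE xf mul0r.
Qed.

Lemma adj_pid m k r : (pid_mx r : 'M[C]_(m,k))^t* = pid_mx r.
Proof. by rewrite tr_pid_mx map_pid_mx. Qed.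

Lemma upid r t (u : 'rV[C]_r) j : (u *m (pid_mx t : 'M_r)) 0 j = (j < t)%:R * u 0 j.
Proof.
rewrite !mxE (bigD1 j) //= big1 ?addr0; first by rewrite !mxE eqxx mulrC.
by move=> l lj; rewrite !mxE; case: eqP => [h|]; [case/eqP: lj; apply/val_inj | rewrite mulr0].
Qed.

Lemma dot_pid_le r t (u : 'rV[C]_r) :
  0 <= (u *m pid_mx t *m u^t*) 0 0 <= (u *m u^t*) 0 0.
Proof.
rewrite !mxE; apply/andP; split.
  by apply: sumr_ge0 => j _; rewrite upid !mxE -mulrA mulr_ge0 ?ler0n ?mul_conjC_ge0.
apply: ler_sum => j _; rewrite upid !mxE; case: (j < t)%N; rewrite ?mul1r //.
by rewrite !mul0r mul_conjC_ge0.
Qed.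

Lemma dot_gt0 r (u : 'rV[C]_r) : u != 0 -> 0 < (u *m u^t*) 0 0.
Proof. by move=> /dotmx_is_dotmx; rewrite dotmxE. Qed.

Lemma pid_gram k r (u : 'rV[C]_r) : (r <= k)%N ->
  (u *m (pid_mx r : 'M_(r,k))) *m (u *m pid_mx r)^t* = u *m u^t*.
Proof.
move=> rk; rewrite cadjM adj_pid !mulmxA -(mulmxA u) mul_pid_mx minnn.
by rewrite (minn_idPr rk) pid_mx_1 mulmx1.
Qed.

Lemma pids_gram k r s (u : 'rV[C]_r) :
  (u *m (pid_mx s : 'M_(r,k))) *m (u *m pid_mx s)^t* = u *m pid_mx (minn k s) *m u^t*.
Proof. by rewrite cadjM adj_pid !mulmxA -(mulmxA u) mul_pid_mx minnn. Qed.

Lemma unitary_det m (g : 'M[C]_m) : g *m g^t* = 1%:M -> `|\det g| = 1.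
Proof.
move=> h; have : `|\det g| ^+ 2 = 1.
  rewrite normCK; have -> : (\det g)^* = \det (g^t*) by rewrite det_map_mx det_tr.
  by rewrite -det_mulmx h det1.
by move/eqP; rewrite sqrp_eq1 ?normr_ge0 // => /eqP.
Qed.

Lemma scale_det m (g : 'M[C]_m) : (0 < m)%N -> g \in unitmx ->
  exists c : C, [/\ c != 0, \det (c *: g) = 1 & (`|\det g| = 1 -> c * c^* = 1)].
Proof.
move=> m0 ug; have d0 : \det g != 0 by rewrite -unit_det_neq0.
exists (m.-root (\det g)^-1); split.
- apply: contra_neq (invr_neq0 d0) => h.
  by rewrite -(rootCK m0 (\det g)^-1) h expr0n eqn0Ngt m0.
- by rewrite detZ rootCK // mulVf.
- move=> h; rewrite -normCK norm_rootC normfV h invr1 rootC1 //.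
  by rewrite expr1n.
Qed.

End Closed.

Section Main.
Variables (R : realType) (p q : nat).
Local Notation C := (R[i]).
Local Notation n := (p + q)%N.

Definition sg (j : 'I_n) : C := if (j < p)%N then 1 else -1.
Definition J : 'M[C]_n := diag_mx (\row_j sg j).

Lemma uJ m (u : 'M[C]_(m,n)) i j : (u *m J) i j = u i j * sg j.
Proof. by rewrite mul_mx_diag !mxE. Qed.

Lemma Ju m (u : 'M[C]_(n,m)) i j : (J *m u) i j = sg i * u i j.
Proof. by rewrite mul_diag_mx !mxE. Qed.

Lemma hformE (u v : 'rV[C]_n) : hform u v = (u *m J *m v^t*) 0 0.
Proof.
rewrite /hform mxE; apply: eq_bigr => j _; rewrite uJ !mxE /sg.
by rewrite [_ * u 0 j]mulrC.
Qed.

Lemma stdE m (u v : 'rV[C]_m) : \sum_(i < m) u 0 i * (v 0 i)^* = (u *m v^t*) 0 0.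
Proof. by rewrite mxE; apply: eq_bigr => j _; rewrite !mxE. Qed.

Lemma hform_inv (g : 'M[C]_n) : g *m J *m g^t* = J ->
  forall u v, hform (u *m g) (v *m g) = hform u v.
Proof.
by move=> h u v; rewrite !hformE cadjM !mulmxA -(mulmxA u) -(mulmxA u) -mulmxA h mulmxA.
Qed.

Lemma std_inv (g : 'M[C]_n) : g *m g^t* = 1%:M ->
  forall u v : 'rV[C]_n, \sum_(i < n) (u *m g) 0 i * ((v *m g) 0 i)^* =
                         \sum_(i < n) u 0 i * (v 0 i)^*.
Proof.
by move=> h u v; rewrite !stdE cadjM mulmxA -(mulmxA u) h mulmx1.
Qed.

Lemma blockdiag_J (g : 'M[C]_n) : blockdiag g -> g *m J = J *m g.
Proof.
move=> bg; apply/matrixP => i j; rewrite uJ Ju /sg.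
case: (boolP ((i < p)%N == (j < p)%N)) => [/eqP ->|h]; first by rewrite mulrC.
by rewrite bg // mul0r mulr0.
Qed.

Lemma K0_of (g : 'M[C]_n) : \det g = 1 -> g *m g^t* = 1%:M -> blockdiag g -> inK0 g.
Proof.
move=> d u b; split; last exact: std_inv.
split; first exact: d.
by apply: hform_inv; rewrite blockdiag_J // -mulmxA u mulmx1.
Qed.

Lemma blockdiag_scale (c : C) (g : 'M[C]_n) : blockdiag g -> blockdiag (c *: g).
Proof. by move=> b i j h; rewrite mxE b // mulr0. Qed.

Lemma blockdiag_block (A : 'M[C]_p) (B : 'M[C]_q) : blockdiag (block_mx A 0 0 B).
Proof.
move=> i j; case: (split_ordP i) => i' ->; case: (split_ordP j) => j' ->;
  rewrite ?block_mxEul ?block_mxEur ?block_mxEdl ?block_mxEdr ?mxE //=;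
  by rewrite ?ltn_ord ?(ltnNge _ p) ?leq_addr.
Qed.

Lemma blockdiag_sub (g : 'M[C]_n) : blockdiag g -> g = block_mx (ulsubmx g) 0 0 (drsubmx g).
Proof.
move=> b; rewrite -{1}[g]submxK; congr block_mx; apply/matrixP => i j; rewrite !mxE b //=.
  by rewrite ltn_ord ltnNge leq_addr.
by rewrite ltn_ord ltnNge leq_addr.
Qed.

Lemma K0_scale (g : 'M[C]_n) : (0 < p)%N -> g *m g^t* = 1%:M -> blockdiag g ->
  exists c : C, c != 0 /\ inK0 (c *: g).
Proof.
move=> p0 u b; have ug : g \in unitmx by case: (mulmx1_unit u).
have [c [c0 dc cc]] := scale_det (leq_trans p0 (leq_addr q p)) ug.
exists c; split => //; apply: K0_of => //; last exact: blockdiag_scale.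
by rewrite cadjZ -scalemxAl -scalemxAr u scalerA cc ?scale1r // unitary_det.
Qed.

Lemma unitary_block (A : 'M[C]_p) (B : 'M[C]_q) : A *m A^t* = 1%:M -> B *m B^t* = 1%:M ->
  block_mx A 0 0 B *m (block_mx A 0 0 B)^t* = 1%:M.
Proof.
move=> hA hB; rewrite tr_block_mx map_block_mx !trmx0 !map_mx0 mulmx_block.
by rewrite !mulmx0 !mul0mx !addr0 !add0r hA hB -scalar_mx_block.
Qed.

Lemma hform_row (a c : 'rV[C]_p) (b d : 'rV[C]_q) :
  hform (row_mx a b) (row_mx c d) = (a *m c^t*) 0 0 - (b *m d^t*) 0 0.
Proof.
rewrite /hform big_split_ord /= -!stdE -sumrN; congr (_ + _); apply: eq_bigr => j _.
  by rewrite !row_mxEl ltn_ord mul1r.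
by rewrite !row_mxEr ltnNge leq_addr /= mulN1r mulNr.
Qed.

End Main.

Section NP.
Variable C : numClosedFieldType.
Lemma normal_pair p m1 m2 (X1 : 'M[C]_(p, m1)) (X2 : 'M[C]_(p, m2)) :
  exists (L : 'M[C]_(\rank X1, p)) (A : 'M[C]_m1) (B : 'M[C]_m2) (s : nat),
  [/\ A \in unitmx, B \in unitmx, L *m X1 *m A = pid_mx (\rank X1)
    & L *m X2 *m B = 2^-1 *: pid_mx s].
Proof.
set r := \rank X1.
have rp : (r <= p)%N := rank_leq_row X1.
have rm : (r <= m1)%N := rank_leq_col X1.
set C1 := col_ebase X1; set R1 := row_ebase X1.
set E0 : 'M_(r,p) := pid_mx r *m invmx C1.
have hE0 : E0 *m X1 = pid_mx r *m R1.
  rewrite -{1}(mulmx_ebase X1) /E0 !mulmxA mulmxKV ?col_ebase_unit //.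
  by rewrite mul_pid_mx minnn (minn_idPr rp).
set W := E0 *m X2.
set CW := col_ebase W; set RW := row_ebase W.
exists (invmx CW *m E0), (invmx R1 *m emb m1 CW), (2^-1 *: invmx RW), (\rank W); split.
- by rewrite unitmx_mul unitmx_inv row_ebase_unit emb_unit // col_ebase_unit.
- by rewrite unitmxZ ?unitmx_inv ?row_ebase_unit // unitfE invr_eq0 pnatr_eq0.
- rewrite -(mulmxA (invmx CW)) hE0 -!mulmxA mulKVmx ?row_ebase_unit // pid_emb //.
  by rewrite mulKmx ?col_ebase_unit.
- have -> : invmx CW *m E0 *m X2 = pid_mx (\rank W) *m RW.
    by rewrite -mulmxA -/W -{1}(mulmx_ebase W) -!mulmxA mulKmx ?col_ebase_unit.
  by rewrite -scalemxAr -mulmxA mulmxV ?row_ebase_unit // mulmx1.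
Qed.

Lemma k_lt1 : (2^-1 : C) * (2^-1)^* < 1.
Proof.
have h : (2^-1 : C) < 1 by rewrite invf_lt1 ?ltr0n // ltr1n.
rewrite fmorphV rmorph_nat mulr_ilt1 // ?invr_ge0 ?ler0n //.
Qed.

Lemma k_ge0 : 0 <= (2^-1 : C) * (2^-1)^*.
Proof. by rewrite mul_conjC_ge0. Qed.
End NP.

Section Main2.
Variables (R : realType) (p q : nat).
Local Notation C := (R[i]).
Local Notation n := (p + q)%N.

Lemma pos_V r s (u : 'rV[C]_r) : (r <= p)%N -> u != 0 ->
  0 < hform (u *m row_mx (pid_mx r : 'M_(r,p)) (2^-1 *: (pid_mx s : 'M_(r,q))))
            (u *m row_mx (pid_mx r : 'M_(r,p)) (2^-1 *: (pid_mx s : 'M_(r,q)))).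
Proof.
move=> rp u0; rewrite mul_mx_row hform_row pid_gram // -scalemxAr cadjZ.
rewrite -scalemxAl -scalemxAr scalerA pids_gram [X in _ - X]mxE.
have [h1 h2] := andP (dot_pid_le (minn q s) u).
have T0 := dot_gt0 u0.
rewrite subr_gt0; apply: le_lt_trans (ler_wpM2l (k_ge0 C) h2) _.
by rewrite gtr_pMl // k_lt1.
Qed.

Lemma neg_V r s (u : 'rV[C]_r) : (r <= q)%N -> u != 0 ->
  hform (u *m row_mx (2^-1 *: (pid_mx s : 'M_(r,p))) (pid_mx r : 'M_(r,q)))
        (u *m row_mx (2^-1 *: (pid_mx s : 'M_(r,p))) (pid_mx r : 'M_(r,q))) < 0.
Proof.
move=> rq u0; rewrite mul_mx_row hform_row pid_gram // -scalemxAr cadjZ.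
rewrite -scalemxAl -scalemxAr scalerA pids_gram [X in X - _]mxE.
have [h1 h2] := andP (dot_pid_le (minn p s) u).
have T0 := dot_gt0 u0.
rewrite subr_lt0; apply: le_lt_trans (ler_wpM2l (k_ge0 C) h2) _.
by rewrite gtr_pMl // k_lt1.
Qed.

Lemma hform0 : hform (0 : 'rV[C]_n) 0 = 0.
Proof. by rewrite hformE !mul0mx mxE. Qed.

Lemma sig_transport (y x : 'M[C]_(p,n)) s t (g : 'M[C]_n) :
  has_signature y s t -> g \in unitmx ->
  (forall u v, hform (u *m g) (v *m g) = hform u v) ->
  (x == y *m g)%MS -> has_signature x s t.
Proof.
move=> [P [N [fP [fN [e [o [pP nN]]]]]]] ug hg ex.
exists (P *m g), (N *m g); split; [|split; [|split; [|split; [|split]]]].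
- by rewrite /row_free mxrankMfree ?row_free_unit.
- by rewrite /row_free mxrankMfree ?row_free_unit.
- rewrite -mul_col_mx; apply/eqmxP.
  exact: eqmx_trans (eqmxMr g (eqmxP e)) (eqmx_sym (eqmxP ex)).
- by move=> u v; rewrite !mulmxA hg.
- move=> u; rewrite !mulmxA hg => h; apply: pP.
  by apply: contraNneq h => ->; rewrite mul0mx.
- move=> u; rewrite !mulmxA hg => h; apply: nN.
  by apply: contraNneq h => ->; rewrite mul0mx.
Qed.

Lemma sig_bound_pos (y : 'M[C]_(p,n)) s t r (V : 'M[C]_(r,n)) :
  has_signature y s t -> (V <= y)%MS ->
  (forall u, u != 0 -> 0 < hform (u *m V) (u *m V)) -> (r + t <= p)%N.
Proof.
move=> [P [N [fP [fN [e [o [pP nN]]]]]]] sV hV.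
have fV : row_free V.
  apply: kerfree => u h; apply/eqP; apply: contraT => u0.
  by have := hV u u0; rewrite h hform0 ltxx.
have sN : (N <= y)%MS.
  have := submx_refl (col_mx P N); rewrite col_mx_sub => /andP[_ h].
  by rewrite -(eqmxP e).
have cap0 : ((V :&: N)%MS == 0).
  apply/rowV0P => v; rewrite sub_capmx => /andP [vV vN].
  have [u eu] := submxP vV; have [w ew] := submxP vN.
  apply/eqP; apply: contraT => h0.
  have u0 : u != 0 by apply: contraNneq h0 => u0; rewrite eu u0 mul0mx.
  have := hV u u0; have : w *m N != 0 by rewrite -ew.
  move/nN; rewrite -ew eu => neg pos.
  by have := lt_trans neg pos; rewrite ltxx.
have := mxrank_sum_cap V N; rewrite (eqP cap0) mxrank0 addn0 (eqP fV) (eqP fN) => <-.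
apply: leq_trans (rank_leq_row y); apply: mxrankS; by rewrite addsmx_sub sV sN.
Qed.

Lemma sig_bound_neg (y : 'M[C]_(p,n)) s t r (V : 'M[C]_(r,n)) :
  has_signature y s t -> (V <= y)%MS ->
  (forall u, u != 0 -> hform (u *m V) (u *m V) < 0) -> (r + s <= p)%N.
Proof.
move=> [P [N [fP [fN [e [o [pP nN]]]]]]] sV hV.
have fV : row_free V.
  apply: kerfree => u h; apply/eqP; apply: contraT => u0.
  by have := hV u u0; rewrite h hform0 ltxx.
have sP : (P <= y)%MS.
  have := submx_refl (col_mx P N); rewrite col_mx_sub => /andP[h _].
  by rewrite -(eqmxP e).
have cap0 : ((V :&: P)%MS == 0).
  apply/rowV0P => v; rewrite sub_capmx => /andP [vV vP].
  have [u eu] := submxP vV; have [w ew] := submxP vP.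
  apply/eqP; apply: contraT => h0.
  have u0 : u != 0 by apply: contraNneq h0 => u0; rewrite eu u0 mul0mx.
  have := hV u u0; have : w *m P != 0 by rewrite -ew.
  move/pP; rewrite -ew eu => pos neg.
  by have := lt_trans neg pos; rewrite ltxx.
have := mxrank_sum_cap V P; rewrite (eqP cap0) mxrank0 addn0 (eqP fV) (eqP fP) => <-.
apply: leq_trans (rank_leq_row y); apply: mxrankS; by rewrite addsmx_sub sV sP.
Qed.

End Main2.

Section StepB.
Variables (R : realType) (p q : nat).
Local Notation C := (R[i]).
Local Notation n := (p + q)%N.

Lemma row_block m (X1 : 'M[C]_(m,p)) (X2 : 'M[C]_(m,q)) (A : 'M[C]_p) (B : 'M[C]_q) :
  row_mx X1 X2 *m block_mx A 0 0 B = row_mx (X1 *m A) (X2 *m B).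
Proof. by rewrite mul_row_block !mulmx0 addr0 add0r. Qed.

Lemma block_unit (A : 'M[C]_p) (B : 'M[C]_q) :
  A \in unitmx -> B \in unitmx -> block_mx A 0 0 B \in unitmx.
Proof. by move=> uA uB; rewrite unitmxE det_ublock unitrM -!unitmxE uA uB. Qed.

Lemma stepB a (C0 : 'M[C]_(p,n) -> Prop) : (0 < p)%N -> base_cycle a C0 ->
  forall x, C0 x ->
  (\rank (lsubmx x) + a <= p)%N /\ (\rank (rsubmx x) + (p - a) <= p)%N.
Proof.
move=> p0 [_ [hD hK]] x Cx.
have n0 : (0 < n)%N by apply: leq_trans p0 (leq_addr q p).
have key : forall k0 : 'M[C]_n, k0 \in unitmx -> blockdiag k0 ->
    has_signature (x *m k0) (p - a) a.
  move=> k0 uk0 bk0.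
  have [c [c0 dc _]] := scale_det n0 uk0.
  have Ck : C0 (x *m (c *: k0)).
    by apply: hK => //; split; [exact: dc | exact: blockdiag_scale].
  have [_ hs] := hD _ Ck.
  apply: (sig_transport hs (g := 1%:M)); first exact: unitmx1.
    by move=> u v; rewrite !mulmx1.
  rewrite mulmx1 -scalemxAr; apply/eqmxP; apply: eqmx_sym; exact: eqmx_scale.
have hx : x = row_mx (lsubmx x) (rsubmx x) by rewrite hsubmxK.
split.
- have [L [A [B [s [uA uB e1 e2]]]]] := normal_pair (lsubmx x) (rsubmx x).
  have hs := key _ (block_unit uA uB) (blockdiag_block A B).
  apply: (sig_bound_pos hs (V := L *m (x *m block_mx A 0 0 B))); first exact: submxMl.
  move=> u u0; rewrite [in X in X *m block_mx _ _ _ _]hx row_block mul_mx_row !mulmxA e1 e2.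
  by apply: pos_V => //; apply: rank_leq_row.
- have [L [A [B [s [uA uB e1 e2]]]]] := normal_pair (rsubmx x) (lsubmx x).
  have hs := key _ (block_unit uB uA) (blockdiag_block B A).
  apply: (sig_bound_neg hs (V := L *m (x *m block_mx B 0 0 A))); first exact: submxMl.
  move=> u u0; rewrite [in X in X *m block_mx _ _ _ _]hx row_block mul_mx_row !mulmxA e1 e2.
  by apply: neg_V => //; apply: rank_leq_col.
Qed.

End StepB.

Section RankStuff.
Variable F : fieldType.
Lemma rank_col_le m1 m2 k (A : 'M[F]_(m1,k)) (B : 'M[F]_(m2,k)) :
  (\rank (col_mx A B) <= \rank A + \rank B)%N.
Proof. by rewrite -addsmxE; apply: mxrank_adds_leqif. Qed.

Lemma rank_row_le m k1 k2 (A : 'M[F]_(m,k1)) (B : 'M[F]_(m,k2)) :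
  (\rank (row_mx A B) <= \rank A + \rank B)%N.
Proof.
by rewrite -mxrank_tr tr_row_mx; apply: leq_trans (rank_col_le _ _) _; rewrite !mxrank_tr.
Qed.

Lemma rank_lr m k1 k2 (X : 'M[F]_(m,k1 + k2)) :
  (\rank X <= \rank (lsubmx X) + \rank (rsubmx X))%N.
Proof. by rewrite -{1}[X]hsubmxK; apply: rank_row_le. Qed.

Lemma lsub_col m1 m2 k1 k2 (A : 'M[F]_(m1,k1 + k2)) (B : 'M[F]_(m2,k1 + k2)) :
  lsubmx (col_mx A B) = col_mx (lsubmx A) (lsubmx B).
Proof.
by apply/matrixP => i j; rewrite mxE; case: (split_ordP i) => k ->;
  rewrite ?col_mxEu ?col_mxEd mxE.
Qed.

Lemma rsub_col m1 m2 k1 k2 (A : 'M[F]_(m1,k1 + k2)) (B : 'M[F]_(m2,k1 + k2)) :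
  rsubmx (col_mx A B) = col_mx (rsubmx A) (rsubmx B).
Proof.
by apply/matrixP => i j; rewrite mxE; case: (split_ordP i) => k ->;
  rewrite ?col_mxEu ?col_mxEd mxE.
Qed.

Lemma rank_transport m k (z w w1 : 'M[F]_(m,k)) (g : 'M[F]_k) : g \in unitmx ->
  (z *m g == z)%MS -> (w == w1 *m g)%MS ->
  \rank (col_mx z w) = \rank (col_mx z w1).
Proof.
move=> ug ez ew.
have e1 : (z + w :=: z *m g + w1 *m g)%MS := adds_eqmx (eqmx_sym (eqmxP ez)) (eqmxP ew).
by rewrite -addsmxE e1 addsmxE -mul_col_mx mxrankMfree ?row_free_unit.
Qed.
End RankStuff.

Section StepA.
Variables (R : realType) (p q : nat).
Local Notation C := (R[i]).
Local Notation n := (p + q)%N.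

Lemma le_sum2 m k (M : 'M[C]_(m,k)) i j : `|M i j| <= \sum_i' \sum_j' `|M i' j'|.
Proof.
rewrite (bigD1 i) //= (bigD1 j) //= -addrA lerDl addr_ge0 //.
  by apply: sumr_ge0 => l _; rewrite normr_ge0.
by apply: sumr_ge0 => l _; apply: sumr_ge0 => l' _; rewrite normr_ge0.
Qed.

Lemma perturb (z w : 'M[C]_(p,n)) (eps : C) : (p <= q)%N -> row_free z -> 0 < eps ->
  exists w' : 'M[C]_(p,n), (forall i j, `|w' i j - w i j| < eps) /\
                          \rank (col_mx z w') = (p + p)%N.
Proof.
move=> pq fz eps0.
set Zc := (z^C)%MS.
have rZc : \rank Zc = q by rewrite mxrank_compl (eqP fz) addKn.
set E : 'M[C]_(p,n) := (pid_mx p : 'M_(p, \rank Zc)) *m row_base Zc.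
have fE : row_free E by rewrite /row_free mxrankMfree ?row_base_free // rank_pid_mx // rZc.
have sE : (E <= Zc)%MS by rewrite (submx_trans (submxMl _ _)) // eq_row_base.
have fM : row_free (col_mx z E).
  rewrite /row_free -addsmxE; apply/eqP.
  have := mxrank_sum_cap z E.
  have -> : \rank (z :&: E)%MS = 0%N.
    apply/eqP; rewrite -leqn0 -(mxrank0 C n n) mxrankS //.
    by rewrite -(capmx_compl z) capmxS.
  by rewrite addn0 (eqP fz) (eqP fE).
set Y := pinvmx (col_mx z E).
have hY : col_mx z E *m Y = 1%:M := mulmxVp fM.
have [zY EY] : z *m Y = row_mx 1%:M 0 /\ E *m Y = row_mx 0 1%:M.
  by move: hY; rewrite mul_col_mx (scalar_mx_block p p) /block_mx => /eq_col_mx.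
set Aw : 'M[C]_p := rsubmx (w *m Y).
have key : forall t, ~~ eigenvalue Aw (- t) -> \rank (col_mx z (w + t *: E)) = (p + p)%N.
  move=> t ht; suff : row_free (col_mx z (w + t *: E)) by move/eqP.
  apply: kerfree => v hv; rewrite -[v]hsubmxK mul_row_col in hv.
  have h2 : (lsubmx v *m z + rsubmx v *m (w + t *: E)) *m Y = 0 by rewrite hv mul0mx.
  rewrite mulmxDl mulmxDr mulmxDl -!mulmxA zY -scalemxAl EY in h2.
  rewrite -[w *m Y]hsubmxK -/Aw scale_row_mx scaler0 scalemx1 !mul_mx_row in h2.
  rewrite !mul_mx_scalar !mulmx0 scale1r in h2.
  rewrite !add_row_mx -row_mx0 in h2; have [_ h3] := eq_row_mx h2.
  have v2 : rsubmx v = 0.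
    apply/eqP; apply: contraT => nz; case/negP: ht; apply/eigenvalueP.
    exists (rsubmx v) => //; apply/eqP; rewrite scaleNr -subr_eq0 opprK.
    by rewrite add0r in h3; rewrite h3.
  rewrite v2 mul0mx addr0 in hv.
  have v1 : lsubmx v = 0 by apply/eqP; rewrite -(mulmx_free_eq0 _ fz) hv.
  by rewrite -[v]hsubmxK v1 v2 row_mx0.
set SE := \sum_i \sum_j `|E i j|.
have SE0 : 0 <= SE.
  by apply: sumr_ge0 => i _; apply: sumr_ge0 => j _; rewrite normr_ge0.
have SE1 : 0 < SE + 1 by rewrite ltr_wpDl // ltr01.
set c := eps / (SE + 1).
have c0 : 0 < c by rewrite divr_gt0.
set rs := [seq - (c / (k.+1)%:R) | k <- iota 0 p.+1].
have : ~~ all (root (char_poly Aw)) rs.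
  apply/negP => hall.
  have uq : uniq rs.
    rewrite map_inj_uniq ?iota_uniq // => k1 k2 h.
    have : (k1.+1)%:R^-1 = (k2.+1)%:R^-1 :> C.
      by apply: (mulfI (negbT (gt_eqF c0))); apply: oppr_inj.
    by move/invr_inj/eqP; rewrite eqr_nat => /eqP [].
  have := max_poly_roots (monic_neq0 (char_poly_monic Aw)) hall uq.
  by rewrite size_char_poly size_map size_iota ltnn.
case/allPn => x /mapP [k _ ->] hk.
exists (w + (c / (k.+1)%:R) *: E); split; last first.
  by apply: key; rewrite eigenvalue_root_char.
move=> i j; rewrite [(w + _) i j]mxE [(_ *: E) i j]mxE addrAC subrr add0r normrM.
have k0 : 0 < (k.+1)%:R :> C by rewrite ltr0n.
have t0 : 0 <= c / (k.+1)%:R by rewrite divr_ge0 ?ltW.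
have tle : c / (k.+1)%:R <= c by rewrite ler_pdivrMr // ler_pMr // ler1n.
rewrite ger0_norm //.
apply: le_lt_trans (ler_wpM2r (normr_ge0 _) tle) _.
apply: le_lt_trans (ler_wpM2l (ltW c0) (le_sum2 E i j)) _.
apply: lt_le_trans (_ : c * SE < c * (SE + 1)) _; first by rewrite ltr_pM2l // ltrDl ltr01.
by rewrite /c divfK ?lexx // (negbT (gt_eqF SE1)).
Qed.

End StepA.

Section Fwd.
Variables (R : realType) (p q : nat).
Local Notation C := (R[i]).
Local Notation n := (p + q)%N.

Lemma blockdiag1 : blockdiag (1%:M : 'M[C]_n).
Proof. by move=> i j h; rewrite mxE; case: eqP => // e; rewrite e eqxx in h. Qed.

Lemma inK0_1 : inK0 (1%:M : 'M[C]_n).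
Proof.
apply: K0_of; [exact: det1 | by rewrite trmx1 map_mx1 mulmx1 | exact: blockdiag1].
Qed.

Lemma eqmx_refl_b m k (A : 'M[C]_(m,k)) : (A == A)%MS.
Proof. by rewrite /eqmx !submx_refl. Qed.

Lemma arith a x y l1 l2 r1 r2 : (a <= p)%N -> (p + p <= x + y)%N ->
  (x <= l1 + l2)%N -> (y <= r1 + r2)%N -> (x <= p)%N -> (y <= q)%N ->
  (l1 + a <= p)%N -> (l2 + a <= p)%N -> (r1 + (p - a) <= p)%N ->
  (r2 + (p - a) <= p)%N -> (p <= 2 * a <= q)%N.
Proof. by move=> *; apply/andP; split; lia. Qed.

Lemma forward a : (0 < p)%N -> (p <= q)%N -> (a <= p)%N ->
  generically_1_connected R p q a -> (p <= 2 * a <= q)%N.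
Proof.
move=> p0 pq ap [C0 [bc hO]].
have [[z0 [fz0 hz0]] _] := bc.
have Cz0 : C0 z0.
  by apply/hz0; split => //; exists 1%:M; split; [exact: inK0_1 | rewrite mulmx1 eqmx_refl_b].
have [O [[[w1 [fw1 hO1]] Oopen] [w [Cw Ow]]]] := hO z0 Cz0.
have [eps [eps0 heps]] := Oopen w Ow.
have [w' [hw' rw']] := perturb w pq fz0 eps0.
have fw' : row_free w'.
  rewrite /row_free eqn_leq rank_leq_row /=.
  by have := rank_col_le z0 w'; rewrite rw' (eqP fz0) leq_add2l.
have Ow' : O w' := heps w' fw' hw'.
move/hO1: Ow => [_ [g [[dg eg0] eg]]].
move/hO1: Ow' => [_ [g' [[dg' eg0'] eg']]].
have ug : g \in unitmx by rewrite unitmxE dg unitr1.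
have ug' : g' \in unitmx by rewrite unitmxE dg' unitr1.
have r1 : \rank (col_mx z0 w) = (p + p)%N.
  by rewrite (rank_transport ug eg0 eg) -(rank_transport ug' eg0' eg') rw'.
have [b1 b2] := stepB p0 bc Cz0; have [c1 c2] := stepB p0 bc Cw.
have h := rank_lr (col_mx z0 w); rewrite r1 lsub_col rsub_col in h.
have l1 := rank_col_le (lsubmx z0) (lsubmx w).
have l2 := rank_col_le (rsubmx z0) (rsubmx w).
have l3 := rank_leq_col (col_mx (lsubmx z0) (lsubmx w)).
have l4 := rank_leq_col (col_mx (rsubmx z0) (rsubmx w)).
exact: (arith ap h l1 l2 l3 l4 b1 c1 b2 c2).
Qed.
End Fwd.

Definition cat_fun m1 m2 k (f : 'I_m1 -> 'I_k) (g : 'I_m2 -> 'I_k) (i : 'I_(m1 + m2)) : 'I_k :=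
  match split i with inl x => f x | inr y => g y end.

Lemma cat_inj m1 m2 k (f : 'I_m1 -> 'I_k) (g : 'I_m2 -> 'I_k) :
  injective f -> injective g -> (forall i j, f i != g j) -> injective (cat_fun f g).
Proof.
move=> hf hg hd x y; rewrite /cat_fun.
case: (split_ordP x) => x' ->; case: (split_ordP y) => y' ->.
- by move/hf ->.
- by move/eqP; rewrite (negbTE (hd _ _)).
- by move/eqP; rewrite eq_sym (negbTE (hd _ _)).
- by move/hg ->.
Qed.

Section Gen3.
Variable F : fieldType.

Lemma col_sel m1 m2 k (f : 'I_m1 -> 'I_k) (g : 'I_m2 -> 'I_k) :
  col_mx (sel F f) (sel F g) = sel F (cat_fun f g).
Proof.
apply/matrixP => i j; rewrite !mxE /cat_fun.
by case: (split i) => k'; rewrite !mxE.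
Qed.

Lemma row0_eqmx m1 m2 k1 k2 (X : 'M[F]_(m1,k1)) (Y : 'M[F]_(m2,k1)) :
  (X :=: Y)%MS -> (row_mx X (0 : 'M_(m1,k2)) :=: row_mx Y (0 : 'M_(m2,k2)))%MS.
Proof.
have sub : forall m m' (X : 'M[F]_(m,k1)) (Y : 'M[F]_(m',k1)), (X <= Y)%MS ->
    (row_mx X (0 : 'M_(m,k2)) <= row_mx Y (0 : 'M_(m',k2)))%MS.
  move=> m m' X' Y' /submxP [D ->].
  have -> : row_mx (D *m Y') (0 : 'M_(m,k2)) = D *m row_mx Y' 0 by rewrite mul_mx_row mulmx0.
  exact: submxMl.
move=> e; apply/eqmxP/andP; split; apply: sub; by rewrite e.
Qed.

Lemma row0_eqmx' m1 m2 k1 k2 (X : 'M[F]_(m1,k2)) (Y : 'M[F]_(m2,k2)) :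
  (X :=: Y)%MS -> (row_mx (0 : 'M_(m1,k1)) X :=: row_mx (0 : 'M_(m2,k1)) Y)%MS.
Proof.
have sub : forall m m' (X : 'M[F]_(m,k2)) (Y : 'M[F]_(m',k2)), (X <= Y)%MS ->
    (row_mx (0 : 'M_(m,k1)) X <= row_mx (0 : 'M_(m',k1)) Y)%MS.
  move=> m m' X' Y' /submxP [D ->].
  have -> : row_mx (0 : 'M_(m,k1)) (D *m Y') = D *m row_mx 0 Y' by rewrite mul_mx_row mulmx0.
  exact: submxMl.
move=> e; apply/eqmxP/andP; split; apply: sub; by rewrite e.
Qed.

Lemma col_eqmx m1 m2 m3 m4 k (A : 'M[F]_(m1,k)) (B : 'M[F]_(m2,k)) (A' : 'M[F]_(m3,k))
  (B' : 'M[F]_(m4,k)) : (A :=: A')%MS -> (B :=: B')%MS -> (col_mx A B :=: col_mx A' B')%MS.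
Proof.
move=> eA eB; apply: eqmx_trans (eqmx_sym (addsmxE A B)) _.
exact: eqmx_trans (adds_eqmx eA eB) (addsmxE _ _).
Qed.

Lemma rank_col_eqmx m1 m2 m3 m4 k (A : 'M[F]_(m1,k)) (B : 'M[F]_(m2,k)) (A' : 'M[F]_(m3,k))
  (B' : 'M[F]_(m4,k)) : (A :=: A')%MS -> (B :=: B')%MS ->
  \rank (col_mx A B) = \rank (col_mx A' B').
Proof. by move=> eA eB; rewrite (col_eqmx eA eB). Qed.
End Gen3.

Lemma dom_free (K : numFieldType) m (D : 'M[K]_m) (d : K) : 0 <= d -> m%:R * d < 1 ->
  (forall i j, `|D i j| <= d) -> row_free (1%:M + D).
Proof.
move=> d0 md hD; apply: kerfree => v hv.
have hv' : v = - (v *m D).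
  by apply/eqP; rewrite -addr_eq0 -{1}[v]mulmx1 -mulmxDr hv.
set S := \sum_k `|v 0 k|.
have S0 : 0 <= S by apply: sumr_ge0 => k _; rewrite normr_ge0.
have hk : forall k, `|v 0 k| <= d * S.
  move=> k; rewrite {1}hv' mxE normrN mxE (le_trans (ler_norm_sum _ _ _)) //.
  rewrite /S mulr_sumr; apply: ler_sum => j _; rewrite normrM mulrC.
  by rewrite ler_wpM2r ?normr_ge0.
have hS : S <= m%:R * d * S.
  rewrite /S; apply: le_trans (ler_sum _ (fun k _ => hk k)) _.
  by rewrite sumr_const card_ord -/S -mulrA mulr_natl.
have : (1 - m%:R * d) * S <= 0 by rewrite mulrBl mul1r subr_le0.
rewrite pmulr_rle0 ?subr_gt0 // => Sle.
have S00 : S = 0 by apply/eqP; rewrite eq_le Sle S0.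
apply/rowP => k; rewrite mxE; apply/eqP; rewrite -normr_eq0; apply/eqP.
by apply: (psumr_eq0P _ S00) => // j _; rewrite normr_ge0.
Qed.

Section More.
Variables (R : realType) (p q : nat).
Local Notation C := (R[i]).
Local Notation n := (p + q)%N.
Local Notation J := (@J R p q).
Local Notation sg := (@sg R p q).

Lemma delta_form (X : 'M[C]_n) (i j : 'I_n) :
  ((delta_mx 0 i : 'rV[C]_n) *m X *m (delta_mx 0 j : 'rV[C]_n)^t*) 0 0 = X i j.
Proof.
have -> : (delta_mx 0 i : 'rV[C]_n) *m X = row i X.
  apply/rowP => k; rewrite !mxE (bigD1 i) //= big1 ?addr0.
    by rewrite !mxE !eqxx mul1r.
  by move=> l hl; rewrite !mxE (negbTE hl) mul0r.
rewrite mxE (bigD1 j) //= big1 ?addr0.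
  by rewrite !mxE !eqxx rmorph1 mulr1.
by move=> k hk; rewrite !mxE (negbTE hk) rmorph0 mulr0.
Qed.

Lemma form_eq (A B : 'M[C]_n) :
  (forall u v : 'rV[C]_n, (u *m A *m v^t*) 0 0 = (u *m B *m v^t*) 0 0) -> A = B.
Proof.
move=> H; apply/matrixP => i j; have := H (delta_mx 0 i) (delta_mx 0 j).
by rewrite !delta_form.
Qed.

Lemma negeq (x : C) : x = - x -> x = 0.
Proof.
move=> h; have : x *+ 2 = 0 by rewrite mulr2n {2}h subrr.
by move/eqP; rewrite mulrn_eq0 /= => /eqP.
Qed.

Lemma K0_blockdiag (g : 'M[C]_n) : inK0 g -> blockdiag g.
Proof.
move=> [[_ hg] sg0].
have hu : g *m g^t* = 1%:M.
  apply: form_eq => u v; have := sg0 u v; rewrite !stdE cadjM !mulmxA mulmx1.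
  by [].
have hJ : g *m J *m g^t* = J.
  apply: form_eq => u v; have := hg u v; rewrite !hformE cadjM !mulmxA.
  by [].
have u' : g^t* *m g = 1%:M := mulmx1C hu.
have gJ : g *m J = J *m g by rewrite -[g *m J]mulmx1 -u' !mulmxA hJ.
move=> i j h; have := congr1 (fun M : 'M[C]_n => M i j) gJ; rewrite /= uJ Ju /Defs.blockdiag.
rewrite /sg; move: h; case: (i < p)%N; case: (j < p)%N => //= _.
- by rewrite mulrN1 mul1r => /esym; apply: negeq.
- by rewrite mulr1 mulN1r; apply: negeq.
Qed.

Lemma K0_mul (g h : 'M[C]_n) : inK0 g -> inK0 h -> inK0 (g *m h).
Proof.
move=> [[dg hg] sg0] [[dh hh] sh0]; split; [split|].
- by rewrite /inG det_mulmx dg dh mulr1.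
- by move=> u v; rewrite !mulmxA hh hg.
- by move=> u v; rewrite !mulmxA sh0 sg0.
Qed.

Lemma blockdiag_mul (g h : 'M[C]_n) : blockdiag g -> blockdiag h -> blockdiag (g *m h).
Proof.
move=> bg bh; rewrite (blockdiag_sub bg) (blockdiag_sub bh) mulmx_block.
by rewrite !mulmx0 !mul0mx !addr0 !add0r; apply: blockdiag_block.
Qed.

Lemma transitive_tr (p0 : (0 < p)%N) (z w x : 'M[C]_(p,n)) : (p + p <= n)%N ->
  \rank (col_mx z w) = (p + p)%N -> \rank (col_mx z x) = (p + p)%N ->
  exists g, \det g = 1 /\ (z *m g == z)%MS /\ (x == w *m g)%MS.
Proof.
move=> ppn rM rM'.
have n0 : (0 < n)%N by apply: leq_trans p0 (leq_addr q p).
set M := col_mx z w; set M' := col_mx z x.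
set g0 := invmx (row_ebase M) *m emb n (invmx (col_ebase M) *m col_ebase M') *m row_ebase M'.
have hg0 : M *m g0 = M'.
  rewrite /g0 !mulmxA -{1}(mulmx_ebase M) rM mulmxK ?row_ebase_unit //.
  rewrite -(mulmxA (col_ebase M)) pid_emb // !mulmxA mulmxV ?col_ebase_unit // mul1mx.
  by have eb := mulmx_ebase M'; rewrite rM' in eb.
have ug0 : g0 \in unitmx.
  rewrite !unitmx_mul unitmx_inv !row_ebase_unit /= andbT emb_unit //.
  by rewrite unitmx_mul unitmx_inv !col_ebase_unit.
have [c [c0 dc _]] := scale_det n0 ug0.
exists (c *: g0); split => //.
move: hg0; rewrite mul_col_mx => /eq_col_mx [ez ew].
split.
- rewrite -scalemxAr ez; apply/eqmxP; exact: eqmx_scale.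
- rewrite -scalemxAr ew; apply/eqmxP; apply: eqmx_sym; exact: eqmx_scale.
Qed.

Lemma le_row_sum m k (Y : 'M[C]_(m,k)) j :
  \sum_l `|Y l j| <= \sum_i \sum_j' `|Y i j'|.
Proof.
apply: ler_sum => l _; rewrite (bigD1 j) //= lerDl.
by apply: sumr_ge0 => i _; rewrite normr_ge0.
Qed.

Lemma zopen_tr (z : 'M[C]_(p,n)) :
  Zopen (fun x : 'M[C]_(p,n) => row_free x /\ \rank (col_mx z x) = (p + p)%N).
Proof.
move=> x [fx rx].
have fM : row_free (col_mx z x) by rewrite /row_free rx.
set Y := pinvmx (col_mx z x).
have hY : col_mx z x *m Y = 1%:M := mulmxVp fM.
set SY := \sum_i \sum_j `|Y i j|.
have SY0 : 0 <= SY.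
  by apply: sumr_ge0 => i _; apply: sumr_ge0 => j _; rewrite normr_ge0.
have SY1 : 0 < SY + 1 by rewrite ltr_wpDl // ltr01.
set m := (p + p)%N.
set eps := ((m.+1)%:R * (SY + 1))^-1.
have eps0 : 0 < eps by rewrite invr_gt0 mulr_gt0 // ltr0n.
exists eps; split => // x' fx' hx'; split => //.
set D := col_mx (0 : 'M[C]_(p, m)) ((x' - x) *m Y).
have eM : col_mx z x' *m Y = 1%:M + D.
  have -> : col_mx z x' = col_mx z x + col_mx 0 (x' - x).
    by rewrite add_col_mx addr0 addrC subrK.
  by rewrite mulmxDl hY mul_col_mx mul0mx.
have hD : forall i j, `|D i j| <= eps * SY.
  move=> i j; rewrite /D; case: (split_ordP i) => k ->.
    by rewrite col_mxEu mxE normr0 mulr_ge0 // ltW.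
  rewrite col_mxEd mxE; apply: le_trans (ler_norm_sum _ _ _) _.
  apply: le_trans (_ : \sum_l eps * `|Y l j| <= _).
    apply: ler_sum => l _; rewrite normrM ler_wpM2r ?normr_ge0 //.
    by rewrite !mxE; apply/ltW/hx'.
  rewrite -mulr_sumr; apply: ler_wpM2l; [exact: ltW eps0 | exact: le_row_sum].
have e1 : eps * (SY + 1) = (m.+1)%:R^-1.
  by rewrite /eps invfM -mulrA mulVf ?mulr1 // lt0r_neq0.
have md : m%:R * (eps * SY) < 1.
  apply: le_lt_trans (_ : m%:R * (eps * (SY + 1)) < 1).
    apply: ler_wpM2l; first exact: ler0n.
    by apply: ler_wpM2l; [exact: ltW eps0 | rewrite lerDl ler01].
  by rewrite e1 ltr_pdivrMr ?ltr0n // mul1r ltr_nat.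
have fD := dom_free (mulr_ge0 (ltW eps0) SY0) md hD.
apply/eqP; rewrite eqn_leq rank_leq_row /=.
have := mxrankM_maxl (col_mx z x') Y; rewrite eM.
by rewrite (eqP fD).
Qed.

End More.

Section Back.
Variables (R : realType) (p q a : nat).
Hypotheses (pq : (p <= q)%N) (ap : (a <= p)%N).
Local Notation C := (R[i]).
Local Notation n := (p + q)%N.
Local Notation J := (@J R p q).
Local Notation sg := (@sg R p q).

Lemma aq : (a <= q)%N. Proof. exact: leq_trans ap pq. Qed.
Definition fP (i : 'I_(p - a)) : 'I_n := lshift q (widen_ord (leq_subr a p) i).
Definition fN (i : 'I_a) : 'I_n := rshift p (widen_ord aq i).
Definition Pm := sel C fP.
Definition Nm := sel C fN.
Definition z0 : 'M[C]_(p, n) := castmx (subnK ap, erefl n) (col_mx Pm Nm).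

Lemma fP_inj : injective fP.
Proof. by move=> x y /(congr1 val) /= h; apply: val_inj. Qed.
Lemma fN_inj : injective fN.
Proof. by move=> x y /(congr1 val) /= /addnI h; apply: val_inj. Qed.
Lemma fPN_disj i j : fP i != fN j.
Proof.
apply/eqP => /(congr1 val) /=; have := ltn_ord i; have := leq_subr a p; lia.
Qed.
Lemma fPN_inj : injective (cat_fun fP fN).
Proof. exact: cat_inj fP_inj fN_inj fPN_disj. Qed.

Lemma z0_eq : (z0 :=: col_mx Pm Nm)%MS.
Proof. exact: eqmx_cast. Qed.

Lemma z0_free : row_free z0.
Proof.
rewrite /row_free z0_eq /Pm /Nm col_sel (eqP (sel_free _ fPN_inj)).
by rewrite subnK.
Qed.

Lemma sel_J m1 m2 (f : 'I_m1 -> 'I_n) (g : 'I_m2 -> 'I_n) :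
  sel C f *m J *m (sel C g)^t* = \matrix_(i, k) ((f i == g k)%:R * sg (g k)).
Proof.
apply/matrixP => i k; rewrite mxE [RHS]mxE (bigD1 (f i)) //= big1 ?addr0.
  rewrite uJ !mxE eqxx mul1r rmorph_nat eq_sym.
  by case: eqP => [->|]; rewrite ?mulr0 ?mul0r // mulrC.
by move=> j hj; rewrite uJ !mxE (negbTE hj) !mul0r.
Qed.

Lemma hform_sel m1 m2 (f : 'I_m1 -> 'I_n) (g : 'I_m2 -> 'I_n) u v :
  hform (u *m sel C f) (v *m sel C g) = (u *m (sel C f *m J *m (sel C g)^t*) *m v^t*) 0 0.
Proof. by rewrite hformE cadjM !mulmxA. Qed.

Lemma PJP : Pm *m J *m Pm^t* = 1%:M.
Proof.
rewrite /Pm sel_J; apply/matrixP => i k; rewrite !mxE (inj_eq fP_inj) /sg /=.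
have := ltn_ord k; have := leq_subr a p => h1 h2.
by rewrite (leq_trans h2 h1) mulr1.
Qed.

Lemma NJN : Nm *m J *m Nm^t* = - 1%:M.
Proof.
rewrite /Nm sel_J; apply/matrixP => i k; rewrite !mxE (inj_eq fN_inj) /sg /=.
by rewrite ltnNge leq_addr /= mulrN1.
Qed.

Lemma PJN : Pm *m J *m Nm^t* = 0.
Proof.
rewrite /Pm /Nm sel_J; apply/matrixP => i k; rewrite !mxE.
by rewrite (negbTE (fPN_disj i k)) mul0r.
Qed.

Lemma sig0 : has_signature z0 (p - a) a.
Proof.
exists Pm, Nm; split; [exact: sel_free fP_inj|split; [exact: sel_free fN_inj|split]].
  by apply/eqmxP; apply: eqmx_sym; exact: z0_eq.
split; [|split].
- by move=> u v; rewrite hform_sel PJN mulmx0 mul0mx mxE.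
- move=> u hu; rewrite hform_sel PJP mulmx1; apply: dot_gt0.
  by apply: contraNneq hu => ->; rewrite mul0mx.
- move=> u hu; rewrite hform_sel NJN mulmxN mulmx1 mulNmx mxE oppr_lt0; apply: dot_gt0.
  by apply: contraNneq hu => ->; rewrite mul0mx.
Qed.


Definition sigv (j : nat) : nat :=
  if (j < p)%N then ((p - 1) - j)%N else (p + ((q - 1) - (j - p)))%N.
Lemma sig_lt (j : 'I_n) : (sigv j < n)%N.
Proof. rewrite /sigv; have := ltn_ord j; case: (ltnP j p) => h1 h2; lia. Qed.
Definition sigo (j : 'I_n) : 'I_n := Ordinal (sig_lt j).

Lemma sigvL x : (x < p)%N -> sigv x = ((p - 1) - x)%N.
Proof. by rewrite /sigv => ->. Qed.
Lemma sigvR y : sigv (p + y) = (p + ((q - 1) - y))%N.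
Proof. by rewrite /sigv ltnNge leq_addr /= addKn. Qed.

Lemma sigo_inj : injective sigo.
Proof.
move=> x y /(congr1 val) /= h; apply: ord_inj; move: h (ltn_ord x) (ltn_ord y).
rewrite /sigv; case: (ltnP x p); case: (ltnP y p); move=> *; lia.
Qed.

Lemma sigo_block j : (sigo j < p)%N = (j < p)%N.
Proof.
rewrite /= /sigv; have := ltn_ord j; case: (ltnP j p) => h1 h2.
  by apply/idP; lia.
by apply/negbTE; rewrite -leqNgt leq_addr.
Qed.

Definition s0 : 'M[C]_n := sel C sigo.

Lemma s0_unitary : s0 *m s0^t* = 1%:M.
Proof. by rewrite /s0 sel_adj; apply/matrixP => i j; rewrite !mxE (inj_eq sigo_inj). Qed.

Lemma s0_block : blockdiag s0.
Proof.
move=> i j h; rewrite mxE; case: eqP => // e.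
by rewrite e sigo_block eqxx in h.
Qed.

Lemma trans0 (h1 : (p <= 2 * a)%N) (h2 : (2 * a <= q)%N) :
  \rank (col_mx z0 (z0 *m s0)) = (p + p)%N.
Proof.
rewrite (rank_col_eqmx z0_eq (eqmxMr s0 z0_eq)).
rewrite mul_col_mx /Pm /Nm /s0 !sel_mul !col_sel (eqP (sel_free _ _)).
  by rewrite subnK.
have hP : forall x : 'I_(p - a), (x < p)%N.
  by move=> x; apply: leq_trans (ltn_ord x) (leq_subr a p).
apply: cat_inj; [exact: fPN_inj | apply: cat_inj | ].
- exact: inj_comp sigo_inj fP_inj.
- exact: inj_comp sigo_inj fN_inj.
- move=> i j; apply/eqP => /(congr1 val) /=; rewrite sigvR (sigvL (hP i)).
  by have := ltn_ord i; lia.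
- move=> i j; rewrite /cat_fun.
  case: (split_ordP i) => i' _; case: (split_ordP j) => j' _; apply/eqP => /(congr1 val) /=;
  rewrite ?sigvR ?(sigvL (hP _)); have := ltn_ord i'; have := ltn_ord j'; lia.
Qed.

Lemma Pm_row : Pm = row_mx (pid_mx (p - a)) 0.
Proof.
apply/matrixP => i j; case: (split_ordP j) => k ->; rewrite ?row_mxEl ?row_mxEr !mxE.
  by rewrite /fP eq_lshift -val_eqE /= eq_sym ltn_ord andbT.
by rewrite /fP eq_rlshift.
Qed.

Lemma Nm_row : Nm = row_mx 0 (pid_mx a).
Proof.
apply/matrixP => i j; case: (split_ordP j) => k ->; rewrite ?row_mxEl ?row_mxEr !mxE.
  by rewrite /fN eq_lrshift.
by rewrite /fN eq_rshift -val_eqE /= eq_sym ltn_ord andbT.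
Qed.

Lemma Kstab (p0 : (0 < p)%N) k : inK k -> exists k0, inK0 k0 /\ (z0 *m k == z0 *m k0)%MS.
Proof.
move=> [dk bk]; have ek := blockdiag_sub bk.
set A := ulsubmx k; set B := drsubmx k.
have dAB : \det A * \det B = 1 by move: dk; rewrite /inG {1}ek det_ublock.
have uA : A \in unitmx.
  rewrite unitmxE unitfE; apply/eqP => h; move: dAB; rewrite h mul0r => /eqP.
  by rewrite eq_sym oner_eq0.
have uB : B \in unitmx.
  rewrite unitmxE unitfE; apply/eqP => h; move: dAB; rewrite h mulr0 => /eqP.
  by rewrite eq_sym oner_eq0.
set U := block_mx (schmidt A) 0 0 (schmidt B).
have uU : U *m U^t* = 1%:M.
  by apply: unitary_block; apply/unitarymxP; apply: schmidt_unitarymx.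
have [c [c0 hc]] := K0_scale p0 uU (blockdiag_block _ _).
exists (c *: U); split => //.
have e1 : (z0 *m k :=: col_mx Pm Nm *m k)%MS := eqmxMr k z0_eq.
have e2 : (z0 *m (c *: U) :=: col_mx Pm Nm *m U)%MS.
  rewrite -scalemxAr; exact: eqmx_trans (eqmx_scale _ c0) (eqmxMr U z0_eq).
apply/eqmxP; apply: eqmx_trans e1 _; apply: eqmx_trans _ (eqmx_sym e2).
rewrite !mul_col_mx; apply: col_eqmx.
- rewrite Pm_row ek row_block mul0mx /U row_block mul0mx; apply: row0_eqmx.
  exact: pid_schmidt (leq_subr a p) uA.
- rewrite Nm_row ek row_block mul0mx /U row_block mul0mx; apply: row0_eqmx'.
  exact: pid_schmidt aq uB.
Qed.

Theorem backward (p0 : (0 < p)%N) (h1 : (p <= 2 * a)%N) (h2 : (2 * a <= q)%N) :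
  generically_1_connected R p q a.
Proof.
have ppn : (p + p <= n)%N by rewrite leq_add2l.
have [c [c0 hc]] := K0_scale p0 s0_unitary s0_block.
set s1 := c *: s0.
exists (Defs.orbit (@inK0 R p q) z0); split.
  split; first by exists z0; split; [exact: z0_free | by []].
  split.
    move=> w [fw [g [[[dg hg] _] ew]]]; split => //.
    by apply: (sig_transport sig0 _ hg ew); rewrite unitmxE dg unitr1.
  move=> w g [fw [g1 [k1 ew]]] [dg bg].
  have ug : g \in unitmx by rewrite unitmxE dg unitr1.
  split; first by rewrite /row_free mxrankMfree ?row_free_unit.
  have hk : inK (g1 *m g).
    split; first by rewrite /inG det_mulmx dg mulr1; case: k1 => [[]].
    by apply: blockdiag_mul => //; apply: K0_blockdiag.
  have [k0 [k0K e0]] := Kstab p0 hk.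
  exists k0; split => //.
  apply/eqmxP; apply: eqmx_trans (eqmxMr g (eqmxP ew)) _.
  by rewrite -mulmxA; exact: (eqmxP e0).
move=> z [fz [g1 [k1 ez]]].
have ug1 : g1 \in unitmx by case: k1 => [[dg1 _] _]; rewrite unitmxE dg1 unitr1.
have us1 : s1 \in unitmx by case: hc => [[ds1 _] _]; rewrite unitmxE ds1 unitr1.
set w := z0 *m s1 *m g1.
have fw : row_free w.
  by rewrite /row_free !mxrankMfree ?row_free_unit // (eqP z0_free).
have rzw : \rank (col_mx z w) = (p + p)%N.
  rewrite (rank_col_eqmx (eqmxP ez) (eqmx_refl w)) /w -mul_col_mx mxrankMfree ?row_free_unit //.
  have e : (z0 *m s1 :=: z0 *m s0)%MS by rewrite /s1 -scalemxAr; apply: eqmx_scale.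
  by rewrite (rank_col_eqmx (eqmx_refl z0) e) trans0.
exists (fun x => row_free x /\ \rank (col_mx z x) = (p + p)%N); split.
  split; last exact: zopen_tr.
  exists w; split => // x; split.
    move=> [fx rx]; split => //.
    have [g [dg [ezg exg]]] := transitive_tr p0 ppn rzw rx.
    by exists g.
  move=> [fx [g [[dg ezg] exg]]]; split => //.
  have ug : g \in unitmx by rewrite unitmxE dg unitr1.
  by rewrite (rank_transport ug ezg exg).
exists w; split; last by split.
split => //; exists (s1 *m g1); split; first exact: K0_mul.
by rewrite /w mulmxA eqmx_refl_b.
Qed.

End Back.

Theorem theorem3p4 (R : realType) (p q a : nat) :
  (1 <= p)%N -> (p <= q)%N -> (a <= p)%N ->
  (generically_1_connected R p q a <-> (p <= 2 * a <= q)%N).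
Proof.
move=> p1 pq ap; split; first exact: forward.
by case/andP => h1 h2; apply: backward.
Qed.
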